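(* Let $\alpha:\mathbf A\to\mathbf B$ be a surjective homomorphism of $\tau$-algebras, and write $\alpha^\omega:A^\omega\to B^\omega$ for its coordinatewise extension. Then: (1) for every function $\varphi:A^\omega\to A$ there is at most one $\psi:B^\omega\to B$ with $\psi\circ\alpha^\omega=\alpha\circ\varphi$; when it exists, denote it $\alpha^\star(\varphi)$; (2) the set $C$ of all $\varphi:A^\omega\to A$ for which $\alpha^\star(\varphi)$ exists is the universe of a subalgebra $\mathcal C$ of $\mathcal O^{(\omega)}_{\mathbf A}$; (3) $\alpha^\star:\mathcal C\to\mathcal O^{(\omega)}_{\mathbf B}$ is a surjective homomorphism of infinitary clone $\tau$-algebras.
   Context: $\tau$ is a set of $\omega$-ary operation symbols; a $\tau$-algebra has operations $f^{\mathbf A}:A^\omega\to A$. For a $\tau$-algebra $\mathbf A$, $\mathcal O^{(\omega)}_{\mathbf A}$ is the algebra whose universe is all functions $A^\omega\to A$, with constants $e_i(s)=s_i$ ($i\in\omega$), a constant $f^{\mathbf A}$ for each $f\in\tau$, and the $\omega$-ary operation $q(g_0,g_1,\dots)(s)=g_0(g_1(s),g_2(s),\dots)$; this is an infinitary clone $\tau$-algebra (an algebra with constants $e_i$, $f$ and $\omega$-ary $q$ satisfying $q(e_i,x_0,x_1,\dots)=x_i$, $q(x,e_0,e_1,\dots)=x$, and $q(q(x,\boldsymbol y),\boldsymbol z)=q(x,q(y_0,\boldsymbol z),q(y_1,\boldsymbol z),\dots)$). *)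

(* Defs.v *)
From Stdlib Require Import ClassicalEpsilon.

(* A tau-algebra with omega-ary operations: carrier A, interpretation
   op : tau -> (nat -> A) -> A.  A^omega is represented by nat -> A. *)

Definition is_hom {tau A B : Type} (opA : tau -> (nat -> A) -> A)
  (opB : tau -> (nat -> B) -> B) (alpha : A -> B) : Prop :=
  forall (f : tau) (s : nat -> A), alpha (opA f s) = opB f (fun i => alpha (s i)).

Definition alpha_omega {A B : Type} (alpha : A -> B) (s : nat -> A) : nat -> B :=
  fun i => alpha (s i).

(* Operations of the clone algebra O^(omega)_A (universe: (nat -> A) -> A) *)
Definition clone_e {A : Type} (i : nat) : (nat -> A) -> A := fun s => s i.
Definition clone_q {A : Type} (g : nat -> ((nat -> A) -> A)) : (nat -> A) -> A :=
  fun s => g 0 (fun i => g (S i) s).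

Definition is_lift {A B : Type} (alpha : A -> B) (phi : (nat -> A) -> A)
  (psi : (nat -> B) -> B) : Prop :=
  forall s : nat -> A, psi (alpha_omega alpha s) = alpha (phi s).

Definition liftable {A B : Type} (alpha : A -> B) (phi : (nat -> A) -> A) : Prop :=
  exists psi, is_lift alpha phi psi.

(* alpha^star(phi): the lift if it exists (chosen by epsilon; by part (1)
   it is unique), and an irrelevant default (the projection e_0) otherwise. *)
Definition alpha_star {A B : Type} (alpha : A -> B) (phi : (nat -> A) -> A)
  : (nat -> B) -> B :=
  epsilon (inhabits (fun s : nat -> B => s 0)) (fun psi => is_lift alpha phi psi).

(* Main.v *)
Require Import Defs.
From Stdlib Require Import ClassicalEpsilon FunctionalExtensionality.

Lemma star_spec {A B : Type} (alpha : A -> B) phi :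
  liftable alpha phi -> is_lift alpha phi (alpha_star alpha phi).
Proof.
  intros [psi H]. unfold alpha_star.
  apply (epsilon_spec (inhabits (fun s : nat -> B => s 0)) (fun psi => is_lift alpha phi psi)).
  exists psi; exact H.
Qed.

Theorem lemma5p3 (tau A B : Type)
  (opA : tau -> (nat -> A) -> A) (opB : tau -> (nat -> B) -> B)
  (alpha : A -> B)
  (Hhom : is_hom opA opB alpha)
  (Hsurj : forall b : B, exists a : A, alpha a = b) :
  (* (1) uniqueness of the lift, and alpha_star denotes it when it exists *)
  (forall (phi : (nat -> A) -> A) (psi1 psi2 : (nat -> B) -> B),
      is_lift alpha phi psi1 -> is_lift alpha phi psi2 -> psi1 = psi2) /\
  (forall phi : (nat -> A) -> A,
      liftable alpha phi -> is_lift alpha phi (alpha_star alpha phi)) /\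
  (* (2) C is a subuniverse of O^(omega)_A *)
  ((forall i : nat, liftable alpha (clone_e i)) /\
   (forall f : tau, liftable alpha (opA f)) /\
   (forall g : nat -> ((nat -> A) -> A),
       (forall j, liftable alpha (g j)) -> liftable alpha (clone_q g))) /\
  (* (3) alpha_star : C -> O^(omega)_B is a surjective homomorphism *)
  ((forall i : nat, alpha_star alpha (clone_e i) = clone_e i) /\
   (forall f : tau, alpha_star alpha (opA f) = opB f) /\
   (forall g : nat -> ((nat -> A) -> A),
       (forall j, liftable alpha (g j)) ->
       alpha_star alpha (clone_q g) = clone_q (fun j => alpha_star alpha (g j))) /\
   (forall psi : (nat -> B) -> B,
       exists phi, liftable alpha phi /\ alpha_star alpha phi = psi)).
Proof.
  destruct (choice (fun (b : B) (a : A) => alpha a = b) Hsurj) as [sec Hsec].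
  assert (Huniq : forall (phi : (nat -> A) -> A) (psi1 psi2 : (nat -> B) -> B),
      is_lift alpha phi psi1 -> is_lift alpha phi psi2 -> psi1 = psi2).
  { intros phi p1 p2 H1 H2. apply functional_extensionality. intro t.
    assert (Ht : t = alpha_omega alpha (fun i => sec (t i))).
    { apply functional_extensionality; intro i; unfold alpha_omega; now rewrite Hsec. }
    rewrite Ht, H1, H2. reflexivity. }
  assert (Hst : forall phi psi, is_lift alpha phi psi -> alpha_star alpha phi = psi).
  { intros phi psi H. apply (Huniq phi); [apply star_spec; exists psi|]; exact H. }
  assert (He : forall i, is_lift alpha (clone_e i) (clone_e i)).
  { intros i s. reflexivity. }
  assert (Hf : forall f, is_lift alpha (opA f) (opB f)).
  { intros f s. unfold alpha_omega. symmetry. apply Hhom. }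
  assert (Hq : forall g : nat -> ((nat -> A) -> A), (forall j, liftable alpha (g j)) ->
     is_lift alpha (clone_q g) (clone_q (fun j => alpha_star alpha (g j)))).
  { intros g Hg s. unfold clone_q.
    assert (E : (fun i => alpha_star alpha (g (S i)) (alpha_omega alpha s))
              = alpha_omega alpha (fun i => g (S i) s)).
    { apply functional_extensionality; intro i. apply (star_spec alpha (g (S i)) (Hg (S i))). }
    rewrite E. apply (star_spec alpha (g 0) (Hg 0)). }
  split; [exact Huniq|].
  split; [apply star_spec|].
  split.
  { split; [intro i; exists (clone_e i); apply He|].
    split; [intro f; exists (opB f); apply Hf|].
    intros g Hg. eexists; apply Hq; exact Hg. }
  split; [intro i; apply Hst, He|].
  split; [intro f; apply Hst, Hf|].
  split; [intros g Hg; apply Hst, Hq, Hg|].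
  intro psi. exists (fun s => sec (psi (alpha_omega alpha s))).
  assert (L : is_lift alpha (fun s => sec (psi (alpha_omega alpha s))) psi).
  { intro s. now rewrite Hsec. }
  split; [exists psi; exact L | apply Hst, L].
Qed.
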